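(* Let $\mathcal Y\subset\mathbb R^d$ be finite with no element a strict convex combination of others, $Y$ the matrix with columns $y\in\mathcal Y$, $\mathcal C=\operatorname{conv}(\mathcal Y)$, and $V$ the direction of $\operatorname{aff}(\mathcal Y)$. Let $\Omega_\Delta$ be a proper l.s.c. convex function on $\mathbb R^{\mathcal Y}$ with domain $\Delta^{\mathcal Y}$ whose restriction to the affine hull $H_\Delta$ of $\Delta^{\mathcal Y}$ is Legendre-type (w.r.t. the metric of $H_\Delta$). Define $\Omega_{\mathcal C}(\mu):=\min\{\Omega_\Delta(q):q\in\Delta^{\mathcal Y},\ Yq=\mu\}$ for $\mu\in\mathcal C$ (and $+\infty$ otherwise). For $\theta\in\mathbb R^d$ and $q\in\Delta^{\mathcal Y}$ put $s_\theta=Y^\top\theta$, $\mu_q=Yq$. Then: (1) $\langle s_\theta|q\rangle=\langle\theta|\mu_q\rangle$. (2) $\Omega_{\mathcal C}^*(\theta)=\Omega_\Delta^*(Y^\top\theta)$; hence $\operatorname{dom}(\Omega^*_{\mathcal C})=\mathbb R^d$, $\Omega^*_{\mathcal C}$ is differentiable on $\mathbb R^d$ and affine on $V^\perp$. (3) $\Omega_\Delta(q)\ge\Omega_{\mathcal C}(\mu_q)$ and $\mathcal L_{\Omega_\Delta}(s_\theta;q)\ge\mathcal L_{\Omega_{\mathcal C}}(\theta;\mu_q)$, both with equality if and only if $q$ minimizes $\Omega_\Delta$ over $\{q'\in\Delta^{\mathcal Y}:Yq'=\mu_q\}$. (4) $\inf_{\theta'}\mathcal L_{\Omega_\Delta}(s_{\theta'};q)\ge\inf_{\theta'}\mathcal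 L_{\Omega_{\mathcal C}}(\theta';\mu_q)$, with equality if and only if $q$ minimizes $\Omega_\Delta$ over $\{q'\in\Delta^{\mathcal Y}:Yq'=\mu_q\}$. (5) $\nabla_\theta\mathcal L_{\Omega_\Delta}(s_\theta;q)=\nabla_\theta\mathcal L_{\Omega_{\mathcal C}}(\theta;\mu_q)=Y(\nabla\Omega_\Delta^*(s_\theta)-q)=\nabla\Omega^*_{\mathcal C}(\theta)-\mu_q$.
   Context: $\Delta^{\mathcal Y}$ is the probability simplex in $\mathbb R^{\mathcal Y}$. Legendre-type: strictly convex on the interior of its domain and essentially smooth (nonempty interior, differentiable there, gradient norm blowing up at the boundary of the domain). ${}^*$ denotes Fenchel conjugation and for a convex $\Omega$, $\mathcal L_\Omega(\theta;\mu)=\Omega(\mu)+\Omega^*(\theta)-\langle\theta|\mu\rangle$ is its Fenchel–Young loss. *)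

(* Defs.v *)
From HB Require Import structures.
From mathcomp Require Import all_boot all_order all_algebra.
From mathcomp Require Import all_classical all_reals all_analysis.
Set Implicit Arguments. Unset Strict Implicit. Unset Printing Implicit Defensive.
Import Order.TTheory GRing.Theory Num.Theory.
Import numFieldNormedType.Exports.
Local Open Scope classical_set_scope.
Local Open Scope ring_scope.

Definition dotv (R : realType) (k : nat) (u v : 'cV[R]_k) : R :=
  \sum_(i < k) u i 0 * v i 0.

(* Probability simplex Delta^Y, Y indexed by 'I_n (R^Y = 'cV[R]_n). *)
Definition simplex (R : realType) (n : nat) : set 'cV[R]_n :=
  [set q | (forall i, 0 <= q i 0) /\ \sum_(i < n) q i 0 = 1].

Definition relint_simplex (R : realType) (n : nat) : set 'cV[R]_n :=
  [set q | (forall i, 0 < q i 0) /\ \sum_(i < n) q i 0 = 1].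

Definition projV0 (R : realType) (n : nat) (v : 'cV[R]_n) : 'cV[R]_n :=
  v - ((\sum_(i < n) v i 0) / n%:R) *: const_mx 1.

Local Open Scope ereal_scope.

Definition eproper (R : realType) (k : nat) (f : 'cV[R]_k -> \bar R) :=
  (forall x, f x != -oo) /\ (exists x, f x < +oo).

Definition econvex (R : realType) (k : nat) (f : 'cV[R]_k -> \bar R) :=
  forall (x y : 'cV[R]_k) (t : R), (0 < t < 1)%R ->
    f (t *: x + (1 - t) *: y)%R <= t%:E * f x + (1 - t)%:E * f y.

Definition edom (R : realType) (k : nat) (f : 'cV[R]_k -> \bar R) : set 'cV[R]_k :=
  [set x | f x < +oo].

Definition fconj (R : realType) (k : nat) (f : 'cV[R]_k -> \bar R)
  (theta : 'cV[R]_k) : \bar R :=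
  ereal_sup [set (dotv theta mu)%:E - f mu | mu in [set: 'cV[R]_k]].

Definition FYloss (R : realType) (k : nat) (f : 'cV[R]_k -> \bar R)
  (theta mu : 'cV[R]_k) : \bar R :=
  f mu + fconj f theta - (dotv theta mu)%:E.

Definition OmegaC (R : realType) (d n : nat) (Y : 'M[R]_(d, n))
  (f : 'cV[R]_n -> \bar R) (mu : 'cV[R]_d) : \bar R :=
  ereal_inf [set f q | q in [set q | simplex q /\ (Y *m q)%R = mu]].

Local Close Scope ereal_scope.

Definition has_grad (R : realType) (k : nat) (f : 'cV[R]_k -> R) (x g : 'cV[R]_k) :=
  differentiable f x /\ forall v, 'd f x v = dotv g v.

(* g is the gradient at q (in H_Delta, w.r.t. the metric of H_Delta) of the
   restriction of f to H_Delta: the restriction is parametrised by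
   v |-> q + projV0 v, and g lies in the direction of H_Delta automatically. *)
Definition gradH (R : realType) (n : nat) (f : 'cV[R]_n -> \bar R) (q g : 'cV[R]_n) :=
  has_grad (fun v => fine (f (q + projV0 v))) 0 g.

(* Restriction of f to H_Delta = {q | sum q = 1} is of Legendre type,
   given that dom f = Delta (so the interior of the domain inside H_Delta is
   relint_simplex, and its boundary inside H_Delta is simplex \ relint_simplex). *)
Definition legendre_on_H (R : realType) (n : nat) (f : 'cV[R]_n -> \bar R) :=
  (forall (x y : 'cV[R]_n) (t : R), relint_simplex x -> relint_simplex y ->
     x != y -> 0 < t < 1 ->
     (f (t *: x + (1 - t) *: y)%R < t%:E * f x + (1 - t)%:E * f y)%E) /\
  (exists q : 'cV[R]_n, relint_simplex q) /\
  (forall q, relint_simplex q -> exists g, gradH f q g) /\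
  (forall (u g : nat -> 'cV[R]_n) (qb : 'cV[R]_n),
     (forall k, relint_simplex (u k)) -> (forall k, gradH f (u k) (g k)) ->
     u @ \oo --> qb -> simplex qb -> ~ relint_simplex qb ->
     (fun k => Num.sqrt (dotv (g k) (g k))) @ \oo --> +oo).

Definition Vperp (R : realType) (d n : nat) (Y : 'M[R]_(d, n)) : set 'cV[R]_d :=
  [set w | forall i j : 'I_n, dotv w (col i Y - col j Y) = 0].

(* Main.v *)
Require Import Defs.
From HB Require Import structures.
From mathcomp Require Import all_boot all_order all_algebra.
From mathcomp Require Import all_classical all_reals all_analysis.
From mathcomp Require Import ring lra.
Import Order.TTheory GRing.Theory Num.Theory.
Import numFieldNormedType.Exports.
Local Open Scope classical_set_scope.
Local Open Scope ring_scope.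
Set Implicit Arguments. Unset Strict Implicit. Unset Printing Implicit Defensive.
Section Gen.
Context {R : realType}.

Lemma entry_le (m k : nat) (v : 'M[R]_(m,k)) i j : `|v i j| <= `|v|.
Proof.
rewrite [leRHS]/Num.norm /= mx_normrE.
exact: (le_bigmax _ (fun ij : 'I_m * 'I_k => `|v ij.1 ij.2|) (i, j)).
Qed.

Lemma dot_bound k (u v : 'cV[R]_k) : `|dotv u v| <= k%:R * `|u| * `|v|.
Proof.
rewrite /dotv (le_trans (ler_norm_sum _ _ _)) //.
rewrite -mulrA.
have -> : k%:R * (`|u| * `|v|) = \sum_(i < k) (`|u| * `|v|).
  by rewrite sumr_const card_ord mulr_natl.
apply: ler_sum => i _.
by rewrite normrM ler_pM // entry_le.
Qed.

Lemma dotvC k (u v : 'cV[R]_k) : dotv u v = dotv v u.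
Proof. by apply: eq_bigr => i _; rewrite mulrC. Qed.

Lemma dotvDr k (u v w : 'cV[R]_k) : dotv u (v + w) = dotv u v + dotv u w.
Proof. by rewrite /dotv -big_split; apply: eq_bigr => i _; rewrite mxE mulrDr. Qed.

Lemma dotvDl k (u v w : 'cV[R]_k) : dotv (v + w) u = dotv v u + dotv w u.
Proof. by rewrite dotvC dotvDr !(dotvC u). Qed.

Lemma dotvZr k a (u v : 'cV[R]_k) : dotv u (a *: v) = a * dotv u v.
Proof. by rewrite /dotv mulr_sumr; apply: eq_bigr => i _; rewrite mxE mulrCA. Qed.

Lemma dotvZl k a (u v : 'cV[R]_k) : dotv (a *: v) u = a * dotv v u.
Proof. by rewrite dotvC dotvZr dotvC. Qed.

Lemma dotvNr k (u v : 'cV[R]_k) : dotv u (- v) = - dotv u v.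
Proof. by rewrite -scaleN1r dotvZr mulN1r. Qed.

Lemma dotvNl k (u v : 'cV[R]_k) : dotv (- v) u = - dotv v u.
Proof. by rewrite dotvC dotvNr dotvC. Qed.

Lemma dotvBr k (u v w : 'cV[R]_k) : dotv u (v - w) = dotv u v - dotv u w.
Proof. by rewrite dotvDr dotvNr. Qed.

Lemma dotvBl k (u v w : 'cV[R]_k) : dotv (v - w) u = dotv v u - dotv w u.
Proof. by rewrite dotvDl dotvNl. Qed.

Lemma dotv0r k (u : 'cV[R]_k) : dotv u 0 = 0.
Proof. by rewrite /dotv big1 // => i _; rewrite mxE mulr0. Qed.

Lemma dotv0l k (u : 'cV[R]_k) : dotv 0 u = 0.
Proof. by rewrite dotvC dotv0r. Qed.

Lemma dotv_tr d k (Y : 'M[R]_(d, k)) (th : 'cV[R]_d) (q : 'cV[R]_k) :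
  dotv (Y^T *m th) q = dotv th (Y *m q).
Proof.
rewrite /dotv.
under eq_bigr do rewrite mxE big_distrl /=.
rewrite exchange_big /=; apply: eq_bigr => j _.
rewrite mxE big_distrr /=; apply: eq_bigr => i _.
by rewrite mxE mulrCA mulrA [_ * th j 0]mulrC.
Qed.

Lemma has_gradP k (f : 'cV[R]_k -> R) x g :
  has_grad f x g <-> forall eps, 0 < eps -> exists2 del, 0 < del &
    forall h, `|h| < del -> `|f (x + h) - f x - dotv g h| <= eps * `|h|.
Proof.
split.
  move=> [df dE] eps e0.
  have := diff_locally df; move/eqaddoP => /(_ eps e0) /nbhs_norm0P [del del0 P].
  exists del => // h hd; have := P h hd; rewrite !fctE /= dE.
  by rewrite [h + x]addrC opprD addrA.
move=> est.
pose L := fun v : 'cV[R]_k => dotv g v.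
have Llin : linear L by move=> a u v; rewrite /L dotvDr dotvZr.
pose LM := GRing.isLinear.Build _ _ _ _ _ Llin.
pose LL : {linear 'cV[R]_k -> R^o} := HB.pack L LM.
have Lc : continuous LL.
  apply: (@bounded_linear_continuous R _ R^o LL); apply/linear_boundedP.
  near=> r => v; rewrite /= /L dotvC (le_trans (dot_bound _ _)) //.
  rewrite mulrAC ler_wpM2r //; near: r; apply: nbhs_pinfty_ge; exact: num_real.
have E : (f : 'cV[R]_k -> R^o) \o shift x = cst (f x) + (LL : _ -> R^o) +o_ (0 : 'cV[R]_k) id.
  apply/eqaddoP => eps e0; have [del d0 P] := est eps e0.
  apply/(nbhs_norm0P (V := 'cV[R]_k)); exists del => // h /= hd; rewrite !fctE /=.
  by have := P h hd; rewrite [x + h]addrC opprD addrA.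
have dE : 'd f x = LL :> (_ -> _) by apply: diff_unique.
split; last by move=> v; rewrite dE.
by apply/diff_locallyP; rewrite dE; split.
Unshelve. all: by end_near.
Qed.
End Gen.
Section LSC.
Context {R : realType}.
Local Open Scope ereal_scope.

Lemma ereal_between (a b : \bar R) : a < b -> exists r : R, a < r%:E < b.
Proof.
case: a => [a| |]; case: b => [b| |] //=.
- move=> ab; exists ((a + b) / 2)%R; rewrite !lte_fin.
  by rewrite midf_lt ?lte_fin //= ?midf_lt //; move: ab; rewrite lte_fin.
- by move=> _; exists (a + 1)%R; rewrite !lte_fin ltrDl ltr01 ltry.
- by move=> _; exists (b - 1)%R; rewrite ltNyr lte_fin gtrDl ltrN10.
- by move=> _; exists 0%R; rewrite ltNyr ltry.
Qed.

Lemma seq_argmin (X : eqType) (r : X -> R) (s : seq X) (x0 : X) :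
  exists2 xm, xm \in x0 :: s & forall x, x \in x0 :: s -> (r xm <= r x)%R.
Proof.
elim: s => [|a s [xm xmin xmmin]].
  by exists x0 => [|x]; rewrite ?mem_seq1 // => /eqP ->.
have [ra|ra] := leP (r a) (r xm).
  exists a; first by rewrite !inE eqxx orbT.
  move=> x; rewrite !inE => /orP[|/orP[]].
  - by move=> xx0; apply: (le_trans ra); apply: xmmin; rewrite inE xx0.
  - by move=> /eqP ->.
  - by move=> xs; apply: (le_trans ra); apply: xmmin; rewrite inE xs orbT.
exists xm; first by move: xmin; rewrite !inE => /orP[->|->]; rewrite ?orbT.
move=> x; rewrite !inE => /orP[|/orP[]].
- by move=> xx0; apply: xmmin; rewrite inE xx0.
- by move=> /eqP ->; apply: ltW.
- by move=> xs; apply: xmmin; rewrite inE xs orbT.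
Qed.

Lemma lsc_min (T : ptopologicalType) (A : set T) (f : T -> \bar R) :
  compact A -> A !=set0 -> lower_semicontinuous f ->
  exists2 x, A x & forall y, A y -> f x <= f y.
Proof.
move=> cA [x0 Ax0] lf.
apply: contrapT => NH.
have H1 : forall x, exists ry : R * T, A x ->
    A ry.2 /\ f ry.2 < ry.1%:E /\ ry.1%:E < f x.
  move=> x; have [Ax|nAx] := pselect (A x); last by exists (0%R, x).
  have [y Ay fyx] : exists2 y, A y & f y < f x.
    apply: contrapT => NE; apply: NH; exists x => // y Ay.
    by rewrite leNgt; apply/negP => fyx; apply: NE; exists y.
  have [r /andP[r1 r2]] := ereal_between fyx.
  by exists (r, y).
have [ry Hry] := choice H1.
pose U := fun x => [set z | (ry x).1%:E < f z].
have oU : forall x, A x -> open (U x).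
  by move=> x _; move/lower_semicontinuousP : lf; apply.
have cov : A `<=` cover A U.
  by move=> z Az; exists z => //; have [_ []] := Hry z Az.
have cA' : cover_compact A.
  have e := f_equal (fun P => P A) (compact_cover T); simpl in e; by rewrite -e.
have [D' D'A covD'] := cA' T A U oU cov.
have [xm xmin xmmin] := seq_argmin (fun x => (ry x).1) (finmap.enum_fset D') x0.
have Axm : A xm.
  move: xmin; rewrite inE => /orP[/eqP ->//|xD]; have := D'A xm xD; by rewrite inE.
have [Ay [fy _]] := Hry xm Axm.
have [x xD' Ux] := covD' _ Ay.
have : ((ry xm).1 <= (ry x).1)%R by apply: xmmin; rewrite inE xD' orbT.
rewrite -lee_fin => le1.
move: Ux; rewrite /U /= => lt2.
have := lt_trans fy (le_lt_trans le1 lt2).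
by rewrite ltxx.
Qed.

End LSC.
Section Simplex.
Context {R : realType} {n : nat}.

Lemma norm_le_entries (k m : nat) (v : 'M[R]_(k,m)) (c : R) :
  0 <= c -> (forall i j, `|v i j| <= c) -> `|v| <= c.
Proof.
move=> c0 H; rewrite [leLHS]/Num.norm /= mx_normrE.
by apply: bigmax_le => // ij _; apply: H.
Qed.

Lemma norm_tr (k m : nat) (v : 'M[R]_(k,m)) : `|v^T| = `|v|.
Proof.
apply/eqP; rewrite eq_le; apply/andP; split.
  by apply: norm_le_entries => // i j; rewrite mxE entry_le.
apply: norm_le_entries => // i j.
by have := entry_le v^T j i; rewrite mxE.
Qed.

Lemma closed_of_near (k m : nat) (A : set 'M[R]_(k,m)) :
  (forall p, (forall e, 0 < e -> exists y, A y /\ `|p - y| < e) -> A p) ->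
  closed A.
Proof.
move=> H p clp; apply: H => e e0.
have Nb : nbhs p [set y | `|p - y| < e].
  by apply/(nbhs_normP (V := 'M[R]_(k,m))); exists e.
have [y [Ay /= pye]] := clp _ Nb.
by exists y.
Qed.

Lemma simplex_entry_le1 (q : 'cV[R]_n) i : simplex q -> 0 <= q i 0 <= 1.
Proof.
move=> [q0 q1]; rewrite q0 /= -q1 (bigD1 i) //= lerDl.
by apply: sumr_ge0 => j _.
Qed.

Lemma simplex_near_closed (p : 'cV[R]_n) :
  (forall e, 0 < e -> exists y, simplex y /\ `|p - y| < e) -> simplex p.
Proof.
move=> H; split.
  move=> i; apply/ler_addgt0Pr => e e0.
  have [y [[y0 _] pye]] := H e e0.
  have := entry_le (p - y) i 0; rewrite !mxE => h1.
  have h2 := le_lt_trans h1 pye.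
  have := y0 i; move: h2; rewrite ltr_norml => /andP[h3 _] h4.
  lra.
apply/eqP; rewrite -subr_eq0 -normr_le0; apply/ler_addgt0Pr => e e0; rewrite add0r.
have ne0 : 0 < n%:R + 1 :> R by rewrite ltr_wpDl.
have [y [[y0 y1] pye]] := H (e / (n%:R + 1)) (divr_gt0 e0 ne0).
have -> : \sum_(i < n) p i 0 - 1 = \sum_(i < n) (p - y) i 0.
  by rewrite -y1 -sumrB; apply: eq_bigr => i _; rewrite !mxE.
apply: (le_trans (ler_norm_sum _ _ _)).
apply: (@le_trans _ _ (\sum_(i < n) (e / (n%:R + 1)))).
  by apply: ler_sum => i _; apply: ltW; apply: le_lt_trans pye; apply: entry_le.
rewrite sumr_const card_ord -[X in X <= _]mulr_natr.
have ha : e / (n%:R + 1) * (n%:R + 1) = e by rewrite divfK // gt_eqF.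
have hb : 0 < e / (n%:R + 1) by rewrite divr_gt0.
rewrite -[leRHS]ha mulrDr mulr1 lerDl; exact: ltW.
Qed.

Lemma simplex_closed : closed (simplex (R:=R) (n:=n)).
Proof. by apply: closed_of_near => p; apply: simplex_near_closed. Qed.

Lemma trmx_continuous (k : nat) : continuous (fun v : 'rV[R]_k => v^T).
Proof.
apply: (@bounded_linear_continuous R _ _ (trmx : {linear 'rV[R]_k -> 'cV[R]_k})).
apply/linear_boundedP; near=> r => v /=; rewrite norm_tr.
rewrite -[leLHS]mul1r ler_wpM2r //; near: r; apply: nbhs_pinfty_ge; exact: num_real.
Unshelve. all: by end_near.
Qed.

Lemma simplex_compact : compact (simplex (R:=R) (n:=n)).
Proof.
pose S := [set v : 'rV[R]_n | simplex v^T].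
have cS : compact S.
  apply: bounded_closed_compact.
    exists 1; split => // x x1 y Sy; apply: le_trans (ltW x1).
    rewrite -norm_tr; apply: norm_le_entries => // i j.
    have /andP[h0 h1] := simplex_entry_le1 i Sy.
    by move: h0 h1; rewrite !mxE ord1 => h0 h1; rewrite ger0_norm.
  apply: closed_of_near => p H; rewrite /S /=; apply: simplex_near_closed => e e0.
  have [y [Sy pye]] := H e e0; exists y^T; split => //.
  by rewrite -linearB /= norm_tr.
have -> : simplex (R:=R) (n:=n) = (fun v : 'rV[R]_n => v^T) @` S.
  apply/seteqP; split => [q sq|_ [v Sv <-] //].
  by exists q^T; rewrite /S /= trmxK.
apply: continuous_compact => //.
apply: continuous_subspaceT; exact: trmx_continuous.
Qed.

End Simplex.
Section Omega.
Context {R : realType} {n : nat} (Om : 'cV[R]_n -> \bar R)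
  (Hproper : eproper Om) (Hlsc : lower_semicontinuous Om) (Hconv : econvex Om)
  (Hdom : edom Om = simplex (R := R) (n := n)) (Hleg : legendre_on_H Om).

Definition om (q : 'cV[R]_n) : R := fine (Om q).
Definition phi (s q : 'cV[R]_n) : R := dotv s q - om q.

Lemma simplexP (q : 'cV[R]_n) : simplex q <-> (Om q < +oo)%E.
Proof. by rewrite -[simplex q]/((simplex (R:=R) (n:=n)) q) -Hdom. Qed.

Lemma OmE (q : 'cV[R]_n) : simplex q -> Om q = (om q)%:E.
Proof.
move=> /simplexP h; rewrite /om fineK // fin_numE (Hproper.1 q) andTb.
by rewrite (lt_eqF h).
Qed.

Lemma OmNE (q : 'cV[R]_n) : ~ simplex q -> Om q = +oo%E.
Proof.
move=> /simplexP h; apply/eqP; rewrite -leye_eq leNgt; apply/negP => h2; exact: h.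
Qed.

Lemma n_gt0 : (0 < n)%N.
Proof.
case: Hproper => _ [x /simplexP [_]]; case: (n) x => [|//] x.
by rewrite big_ord0 => /eqP; rewrite eq_sym oner_eq0.
Qed.

Lemma simplex_cvx (x y : 'cV[R]_n) (t : R) : simplex x -> simplex y -> 0 <= t <= 1 ->
  simplex (t *: x + (1 - t) *: y).
Proof.
move=> [x0 x1] [y0 y1] /andP[t0 t1]; split.
  by move=> i; rewrite !mxE addr_ge0 // mulr_ge0 // subr_ge0.
under eq_bigr do rewrite !mxE.
by rewrite big_split /= -!mulr_sumr x1 y1 !mulr1 addrC subrK.
Qed.

Lemma om_cvx (x y : 'cV[R]_n) (t : R) : simplex x -> simplex y -> 0 < t < 1 ->
  om (t *: x + (1 - t) *: y) <= t * om x + (1 - t) * om y.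
Proof.
move=> sx sy /[dup] t01 /andP[t0 t1].
have := Hconv x y t01.
have sc : simplex (t *: x + (1 - t) *: y) by apply: simplex_cvx => //; rewrite !ltW.
by rewrite !OmE // -!EFinM -EFinD lee_fin.
Qed.

Lemma om_min : exists m, forall q, simplex q -> m <= om q.
Proof.
have [|x sx xm] := lsc_min simplex_compact _ Hlsc.
  by case: Hproper => _ [x /simplexP sx]; exists x.
exists (om x) => q sq; have := xm q sq; by rewrite !OmE // lee_fin.
Qed.

Lemma lin_continuous (s : 'cV[R]_n) (x : 'cV[R]_n) (c : R) : 0 < c ->
  \forall y \near x, `|dotv s y - dotv s x| < c.
Proof.
move=> c0; apply/(nbhs_normP (V := 'cV[R]_n)).
have C0 : 0 < n%:R * `|s| + 1 by rewrite ltr_wpDl // mulr_ge0.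
exists (c / (n%:R * `|s| + 1)); first by rewrite /= divr_gt0.
move=> y /= xy; rewrite -dotvBr; apply: (le_lt_trans (dot_bound _ _)).
rewrite distrC in xy.
apply: (@le_lt_trans _ _ ((n%:R * `|s| + 1) * `|y - x|)).
  by rewrite ler_wpM2r // lerDl.
by rewrite mulrC -ltr_pdivlMr.
Qed.

Lemma lsc_sub (s : 'cV[R]_n) :
  lower_semicontinuous (fun q => (Om q - (dotv s q)%:E)%E).
Proof.
move=> x a H.
have H2 : ((a + dotv s x)%:E < Om x)%E.
  move: H => /=; case: (Om x) => [r| |] //=; rewrite ?lte_fin ?ltry //.
  by rewrite ltrBrDr.
have [b /andP[b1 b2]] := ereal_between H2.
have [V nV HV] := Hlsc b2.
exists (V `&` [set y | `|dotv s y - dotv s x| < b - (a + dotv s x)]).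
  apply: filterI => //; apply: lin_continuous.
  by rewrite subr_gt0 -lte_fin.
move=> y [/HV Vy /= hy].
move: Vy; case: (Om y) => [r| |] //=; rewrite ?lte_fin ?ltry //.
move=> br; rewrite ltrBrDr; move: hy b1; rewrite lte_fin => hy b1.
have := ler_norm (dotv s y - dotv s x); rewrite -lte_fin in b1 |- *.
move: hy b1 br; rewrite !lte_fin => hy b1 br hn; lra.
Qed.

Lemma argmax (s : 'cV[R]_n) :
  exists2 qs, simplex qs & forall q, simplex q -> phi s q <= phi s qs.
Proof.
have [|x sx xm] := lsc_min simplex_compact _ (lsc_sub (s:=s)).
  by case: Hproper => _ [x /simplexP sx]; exists x.
exists x => // q sq; have := xm q sq; rewrite !OmE // -!EFinB lee_fin /phi.
lra.
Qed.

End Omega.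
Section Omega2.
Context {R : realType} {n : nat} (Om : 'cV[R]_n -> \bar R)
  (Hproper : eproper Om) (Hlsc : lower_semicontinuous Om) (Hconv : econvex Om)
  (Hdom : edom Om = simplex (R := R) (n := n)) (Hleg : legendre_on_H Om).

Local Notation om := (om Om).
Local Notation phi := (phi Om).
Local Notation OmE := (OmE Hproper Hdom).
Local Notation OmNE := (OmNE Hdom).

Definition Phi (s : 'cV[R]_n) : R := fine (fconj Om s).

Lemma fconjE (s qs : 'cV[R]_n) : simplex qs ->
  (forall q, simplex q -> phi s q <= phi s qs) -> fconj Om s = (phi s qs)%:E.
Proof.
move=> sqs qmax; apply/eqP; rewrite eq_le; apply/andP; split.
  apply: ge_ereal_sup => _ [mu _ <-].
  have [smu|nsmu] := pselect (simplex mu).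
    by rewrite OmE // -EFinB lee_fin; apply: qmax.
  by rewrite OmNE //= leNye.
by apply: ereal_sup_ubound; exists qs => //; rewrite OmE // -EFinB.
Qed.

Lemma PhiE (s qs : 'cV[R]_n) : simplex qs ->
  (forall q, simplex q -> phi s q <= phi s qs) -> Phi s = phi s qs.
Proof. by move=> sq qm; rewrite /Phi (fconjE sq qm). Qed.

Lemma fconj_fin (s : 'cV[R]_n) : fconj Om s = (Phi s)%:E.
Proof.
have [qs sq qm] := argmax Hproper Hlsc Hdom s.
by rewrite (PhiE sq qm) (fconjE sq qm).
Qed.

Lemma Phi_ge (s q : 'cV[R]_n) : simplex q -> phi s q <= Phi s.
Proof.
have [qs sq qm] := argmax Hproper Hlsc Hdom s.
by rewrite (PhiE sq qm) => /qm.
Qed.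

Lemma projV0_id (h : 'cV[R]_n) : \sum_(i < n) h i 0 = 0 -> projV0 h = h.
Proof. by rewrite /projV0 => ->; rewrite mul0r scale0r subr0. Qed.

Lemma sum_sub (z x : 'cV[R]_n) : simplex z -> simplex x ->
  \sum_(i < n) (z - x) i 0 = 0.
Proof.
move=> [_ z1] [_ x1]; under eq_bigr do rewrite !mxE.
by rewrite sumrB z1 x1 subrr.
Qed.

Lemma subgrad (x g z : 'cV[R]_n) : relint_simplex x -> gradH Om x g -> simplex z ->
  om x + dotv g (z - x) <= om z.
Proof.
move=> [x0 x1] /has_gradP est sz.
have sx : simplex x by split => // i; apply: ltW.
set v := z - x.
have sv : \sum_(i < n) v i 0 = 0 by apply: sum_sub.
rewrite leNgt; apply/negP => Hlt.
set D := om x + dotv g v - om z.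
have D0 : 0 < D by rewrite /D subr_gt0.
set nv := `|v| + 1.
have nv0 : 0 < nv by rewrite /nv ltr_wpDl.
have e0 : 0 < D / (2 * nv) by rewrite divr_gt0 // mulr_gt0.
have [del del0 Hd] := est _ e0.
set m := Num.min del 1.
have m0 : 0 < m by rewrite /m lt_min del0 ltr01.
have m1 : m <= 1 by rewrite /m ge_min lexx orbT.
have md : m <= del by rewrite /m ge_min lexx.
set t := m / (2 * nv).
have t0 : 0 < t by rewrite /t divr_gt0 // mulr_gt0.
have tnv : t * nv = m / 2 by rewrite /t; field; rewrite gt_eqF.
have t1 : t < 1.
  have : 1 <= nv by rewrite /nv lerDr.
  move: tnv; set w := nv => tnv w1; nra.
have th : `|t *: v| < del.
  rewrite normrZ gtr0_norm //.
  have : `|v| <= nv by rewrite /nv lerDl.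
  move: tnv; set w := nv; set a := `|v| => tnv av; nra.
have := Hd _ th.
rewrite add0r projV0_id; last first.
  by under eq_bigr do rewrite mxE; rewrite -mulr_sumr sv mulr0.
have -> : projV0 (0 : 'cV[R]_n) = 0.
  by rewrite projV0_id // big1 // => i _; rewrite mxE.
rewrite addr0.
have -> : x + t *: v = t *: z + (1 - t) *: x.
  by apply/matrixP => i j; rewrite !mxE; ring.
rewrite -/(om x) -/(om _) dotvZr.
have hc := om_cvx Hproper Hconv Hdom sz sx (t := t).
rewrite t0 t1 /= in hc; have {}hc := hc isT.
have hE : D / (2 * nv) * `|v| <= D / 2.
  have -> : D / 2 = D / (2 * nv) * nv by field; rewrite gt_eqF.
  by rewrite ler_wpM2l ?ltW // /nv ?lerDl ?ltrDl.
rewrite normrZ gtr0_norm // => habs.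
have := ler_norm (- (om (t *: z + (1 - t) *: x) - om x - t * dotv g v)).
rewrite normrN => hn.
have htE := ler_wpM2l (ltW t0) hE.
have tD : 0 < t * D by rewrite mulr_gt0.
move: hc habs hn htE tD; rewrite /D.
move: (om _) (om x) (om z) (dotv g v) (D / (2 * nv)) `|v| => A ox oz G E a.
move=> hc habs hn htE tD.
nra.
Qed.

End Omega2.
Section Omega3.
Context {R : realType} {n : nat} (Om : 'cV[R]_n -> \bar R)
  (Hproper : eproper Om) (Hlsc : lower_semicontinuous Om) (Hconv : econvex Om)
  (Hdom : edom Om = simplex (R := R) (n := n)) (Hleg : legendre_on_H Om).

Local Notation om := (om Om).
Local Notation phi := (phi Om).
Local Notation OmE := (OmE Hproper Hdom).
Local Notation OmNE := (OmNE Hdom).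

Lemma n_gt0' : (0 < n)%N. Proof. exact: (n_gt0 Hproper Hdom). Qed.

Lemma sum_inv : \sum_(i < n) (n%:R : R)^-1 = 1.
Proof.
rewrite sumr_const card_ord -(mulr_natr (n%:R^-1)) mulVf // pnatr_eq0 -lt0n; exact: n_gt0'.
Qed.

Lemma gradH_sum0 (x g : 'cV[R]_n) : gradH Om x g -> \sum_(i < n) g i 0 = 0.
Proof.
move=> /has_gradP est.
have projc : forall c : R, projV0 (c *: const_mx 1 : 'cV[R]_n) = 0.
  move=> c; rewrite /projV0; apply/matrixP => i j; rewrite !mxE.
  under eq_bigr do rewrite !mxE.
  rewrite sumr_const card_ord mulr1 -(mulr_natr c) mulfK ?mulr1 ?subrr //.
  by rewrite pnatr_eq0 -lt0n n_gt0'.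
apply/eqP; rewrite -normr_le0; apply/ler_addgt0Pr => e e0; rewrite add0r.
have [del del0 Hd] := est e e0.
set c := del / 2.
have c0 : 0 < c by rewrite divr_gt0.
set h : 'cV[R]_n := c *: const_mx 1.
have hn : `|h| <= c.
  apply: norm_le_entries; first exact: ltW.
  by move=> i j; rewrite !mxE mulr1 gtr0_norm.
have hd : `|h| < del by apply: (le_lt_trans hn); rewrite /c ltr_pdivrMr // ltr_pMr // ltr1n.
have := Hd _ hd; rewrite add0r projc.
rewrite (_ : projV0 _ = 0); last first.
  by rewrite /projV0 big1 ?mul0r ?scale0r ?subr0 // => i _; rewrite mxE.
rewrite addr0 subrr add0r normrN /h dotvZr normrM gtr0_norm //.
have -> : dotv g (const_mx 1) = \sum_(i < n) g i 0.
  by apply: eq_bigr => i _; rewrite mxE mulr1.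
move=> H; have : c * `|\sum_(i < n) g i 0| <= c * e.
  by apply: (le_trans H); rewrite [c * e]mulrC; apply: ler_wpM2l => //; exact: ltW.
by rewrite ler_pM2l.
Qed.

Lemma abs_add_le (x U : R) : x <= U -> 0 <= U -> `|x| + x <= 2 * U.
Proof.
move=> xU U0; have [x0|x0] := leP 0 x.
  by rewrite ger0_norm //; lra.
by rewrite ltr0_norm //; lra.
Qed.

Lemma dot_delta (g : 'cV[R]_n) j : dotv g (delta_mx j 0) = g j 0.
Proof.
rewrite /dotv (bigD1 j) //= big1 ?addr0; first by rewrite mxE !eqxx mulr1.
by move=> i /negbTE ij; rewrite mxE ij mulr0.
Qed.

Lemma simplex_delta j : simplex (delta_mx j 0 : 'cV[R]_n).
Proof.
split; first by move=> i; rewrite mxE; case: (_ && _).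
rewrite (bigD1 j) //= big1 ?addr0; first by rewrite mxE !eqxx.
by move=> i /negbTE ij; rewrite mxE ij.
Qed.

Lemma argmax_relint (s qs : 'cV[R]_n) : simplex qs ->
  (forall q, simplex q -> phi s q <= phi s qs) -> relint_simplex qs.
Proof.
move=> sqs qm; apply: contrapT => NR.
have nR : 0 < n%:R :> R by rewrite ltr0n n_gt0'.
pose b : 'cV[R]_n := const_mx (n%:R^-1).
have sb : simplex b.
  by split => [i|]; [rewrite mxE invr_ge0 ltW | under eq_bigr do rewrite mxE; exact: sum_inv].
have binv1 : n%:R^-1 <= 1 :> R by rewrite invf_le1 // ler1n n_gt0'.
pose tk := fun k : nat => (k.+1%:R : R)^-1.
have tk0 k : 0 < tk k by rewrite /tk invr_gt0.
have tk1 k : tk k <= 1 by rewrite /tk invf_le1 // ler1n.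
pose u := fun k => (1 - tk k) *: qs + tk k *: b.
have ru : forall k, relint_simplex (u k).
  move=> k; split.
    move=> i; rewrite !mxE; apply: ltr_wpDl.
      by apply: mulr_ge0; [rewrite subr_ge0 | exact: sqs.1].
    by apply: mulr_gt0; rewrite ?invr_gt0.
  under eq_bigr do rewrite !mxE.
  by rewrite big_split /= -!mulr_sumr sqs.2 sum_inv !mulr1 subrK.
have su : forall k, simplex (u k) by move=> k; split => [i|]; [apply: ltW; exact: (ru k).1 | exact: (ru k).2].
have [gk Hg] := choice (fun k => Hleg.2.2.1 _ (ru k)).
have cvu : u @ \oo --> qs.
  apply/cvgrPdist_lt => e e0.
  near=> k.
  have -> : qs - u k = tk k *: (qs - b).
    by apply/matrixP => i j; rewrite /u !mxE; ring.
  rewrite normrZ gtr0_norm //.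
  have : `|qs - b| <= 1.
    apply: norm_le_entries => // i j; rewrite !mxE ord1.
    have := simplex_entry_le1 i sqs; have : 0 <= n%:R^-1 :> R by rewrite invr_ge0 ltW.
    move=> h1 /andP[h2 h3]; rewrite ler_norml; apply/andP; split; lra.
  move=> hb; apply: (le_lt_trans (ler_wpM2l (ltW (tk0 k)) hb)); rewrite mulr1.
  near: k; exact: (near_infty_natSinv_lt (PosNum e0)).
have blow := Hleg.2.2.2 u gk qs ru Hg cvu sqs NR.
set c := dotv s (b - qs).
have [m mH] := om_min Hproper Hlsc Hdom.
set B := \sum_(j < n) `|om (delta_mx j 0)| - m.
set U := `|B| + `|c|.
have U0 : 0 <= U by rewrite addr_ge0.
move/cvgryPgt: blow => /(_ (2 * n%:R * U)) [N _ HN].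
have := HN N (leqnn N) => /=.
set g := gk N; set t := tk N; set v := u N.
have sv : simplex v := su N.
have gH : gradH Om v g := Hg N.
have g0 : \sum_(i < n) g i 0 = 0 := gradH_sum0 gH.
have gb : dotv g b = 0.
  by rewrite /dotv; under eq_bigr do rewrite mxE; rewrite -mulr_suml g0 mul0r.
have ha := subgrad Hproper Hconv Hdom (ru N) gH sqs.
have hb := qm v sv.
have e1 : qs - v = t *: (qs - b) by apply/matrixP => i j; rewrite /v /t /u !mxE; ring.
have e2 : b - v = (1 - t) *: (b - qs) by apply/matrixP => i j; rewrite /v /t /u !mxE; ring.
have e3 : v - qs = t *: (b - qs) by apply/matrixP => i j; rewrite /v /t /u !mxE; ring.
have hgc : c <= dotv g (b - qs).
  move: ha hb; rewrite /phi e1 dotvZr.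
  have -> : dotv s v = dotv s qs + t * c by rewrite /c -dotvZr -e3 dotvBr addrC subrK.
  have -> : dotv g (qs - b) = - dotv g (b - qs) by rewrite -dotvNr opprB.
  move=> ha hb.
  have : t * c <= t * dotv g (b - qs) by lra.
  by rewrite ler_pM2l //; exact: tk0.
have hgbu : - `|c| <= dotv g (b - v).
  rewrite e2 dotvZr.
  have h1 := tk0 N; have h2 := tk1 N.
  have t1 : 0 <= 1 - t <= 1 by apply/andP; split; rewrite /t; lra.
  have := ler_norm (- c); rewrite normrN => hc.
  move: t1 hgc hc => /andP[t1 t2]; move: (dotv g (b - qs)) => G hgc hc.
  have h3 : (1 - t) * c <= (1 - t) * G by rewrite ler_wpM2l.
  have h4 : (1 - t) * (- c) <= (1 - t) * `|c| by rewrite ler_wpM2l.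
  have h5 : (1 - t) * `|c| <= `|c| by rewrite ler_piMl.
  lra.
have gj : forall j, g j 0 <= U.
  move=> j.
  have hc := subgrad Hproper Hconv Hdom (ru N) gH (simplex_delta j).
  have hm := mH v sv.
  have hj : g j 0 = dotv g (delta_mx j 0 - v) - dotv g (b - v).
    by rewrite !dotvBr dot_delta gb; ring.
  have hK : om (delta_mx j 0) <= \sum_(j < n) `|om (delta_mx j 0)|.
    rewrite (bigD1 j) //= (le_trans (ler_norm _)) // lerDl.
    by apply: sumr_ge0 => i _.
  have := ler_norm B; rewrite -/B => hB.
  rewrite hj /U; move: hc hm hK hB hgbu; rewrite /B.
  move: (dotv g _) (dotv g _) (om _) (om _) (\sum_(_ < _) _) `|_| `|_| => a1 a2 o1 o2 S aB ac.
  lra.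
set S := \sum_(i < n) `|g i 0|.
have S0 : 0 <= S by apply: sumr_ge0 => i _.
have hS : S <= 2 * n%:R * U.
  have -> : S = \sum_(i < n) (`|g i 0| + g i 0) by rewrite big_split /= g0 addr0.
  apply: (@le_trans _ _ (\sum_(i < n) (2 * U))).
    by apply: ler_sum => i _; apply: abs_add_le.
  by rewrite sumr_const card_ord -(mulr_natr (2 * U)) mulrAC.
have hgg : dotv g g <= S ^+ 2.
  rewrite expr2 /dotv mulr_suml; apply: ler_sum => i _.
  apply: (@le_trans _ _ (`|g i 0| * `|g i 0|)).
    by rewrite -normrM ler_norm.
  rewrite ler_wpM2l //; rewrite /S (bigD1 i) //= lerDl.
  by apply: sumr_ge0.
have : Num.sqrt (dotv g g) <= 2 * n%:R * U.
  apply: (le_trans (_ : _ <= Num.sqrt (S ^+ 2))).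
    by rewrite ler_sqrt // sqr_ge0.
  by rewrite sqrtr_sqr ger0_norm.
by move=> h1 h2; have := lt_le_trans h2 h1; rewrite ltxx.
Unshelve. all: by end_near.
Qed.

Lemma argmax_uniq (s q1 q2 : 'cV[R]_n) :
  simplex q1 -> (forall q, simplex q -> phi s q <= phi s q1) ->
  simplex q2 -> (forall q, simplex q -> phi s q <= phi s q2) -> q1 = q2.
Proof.
move=> s1 m1 s2 m2; apply: contrapT => neq.
have r1 := argmax_relint s1 m1.
have r2 := argmax_relint s2 m2.
have h12 : 0 < (2^-1 : R) < 1 by apply/andP; split; [rewrite invr_gt0 ltr0n | rewrite invf_lt1 ?ltr1n ?ltr0n].
have := Hleg.1 q1 q2 (2^-1) r1 r2 (introN eqP neq) h12.
have smid : simplex (2^-1 *: q1 + (1 - 2^-1) *: q2).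
  by apply: simplex_cvx => //; move: h12 => /andP[a b]; rewrite !ltW.
rewrite !OmE // -!EFinM -EFinD lte_fin => hlt.
have := m1 _ smid; have := m1 _ s2; have := m2 _ s1.
rewrite /phi dotvDr !dotvZr.
move: hlt; move: (om _) (om q1) (om q2) (dotv s q1) (dotv s q2) => a b c d e.
move=> hlt h1 h2 h3; clear -hlt h1 h2 h3; lra.
Qed.

End Omega3.
Section Omega4.
Context {R : realType} {n : nat} (Om : 'cV[R]_n -> \bar R)
  (Hproper : eproper Om) (Hlsc : lower_semicontinuous Om) (Hconv : econvex Om)
  (Hdom : edom Om = simplex (R := R) (n := n)) (Hleg : legendre_on_H Om).

Local Notation om := (om Om).
Local Notation phi := (phi Om).
Local Notation Phi := (Phi Om).

Lemma closed_far (c : 'cV[R]_n) (e : R) : closed [set q | e <= `|q - c|].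
Proof.
apply: closed_of_near => p H /=; apply/ler_addgt0Pr => e' e'0.
have [y [/= hy py]] := H e' e'0.
apply: (le_trans hy).
have -> : y - c = (p - c) - (p - y) by rewrite opprB [RHS]addrC addrA subrK.
apply: (le_trans (ler_normB _ _)); rewrite lerD2l; exact: ltW.
Qed.

Lemma simplex_dist1 (q1 q2 : 'cV[R]_n) : simplex q1 -> simplex q2 -> `|q1 - q2| <= 1.
Proof.
move=> s1 s2; apply: norm_le_entries => // i j; rewrite !mxE ord1.
have /andP[a1 b1] := simplex_entry_le1 i s1; have /andP[a2 b2] := simplex_entry_le1 i s2.
rewrite ler_norml; apply/andP; split; lra.
Qed.

Lemma Phi_grad (s qs : 'cV[R]_n) : simplex qs ->
  (forall q, simplex q -> phi s q <= phi s qs) -> has_grad Phi s qs.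
Proof.
move=> sqs qm; apply/has_gradP => eps e0.
have nR : 0 < n%:R + 1 :> R by rewrite ltr_wpDl.
set ep := eps / (n%:R + 1).
have ep0 : 0 < ep by rewrite divr_gt0.
pose K := (@simplex R n) `&` [set q | ep <= `|q - qs|].
have [d0 d00 Hd0] : exists2 d0, 0 < d0 & forall q, K q -> phi s q + d0 <= phi s qs.
  have [[p Kp]|K0] := pselect (K !=set0); last first.
    by exists 1 => // q Kq; exfalso; apply: K0; exists q.
  have cK : compact K := compact_closedI simplex_compact (closed_far (c:=qs) (e:=ep)).
  have [x Kx xm] := lsc_min cK (ex_intro _ p Kp) (lsc_sub Hlsc (s:=s)).
  have [sx fx] := Kx.
  have xlt : phi s x < phi s qs.
    rewrite ltNge; apply/negP => hge.
    have xmax : forall q, simplex q -> phi s q <= phi s x.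
      by move=> q /qm h; apply: le_trans h hge.
    have exq := argmax_uniq Hproper Hlsc Hconv Hdom Hleg sx xmax sqs qm.
    by move: fx; rewrite /= exq subrr normr0 leNgt ep0.
  exists (phi s qs - phi s x); first by rewrite subr_gt0.
  move=> q [sq fq]; have := xm q (conj sq fq).
  rewrite !(OmE Hproper Hdom) // -!EFinB lee_fin /phi => h.
  lra.
set del := d0 / (n%:R + 1).
exists del; first by rewrite divr_gt0.
move=> h hd.
have [qh sqh qhm] := argmax Hproper Hlsc Hdom (s + h).
rewrite (PhiE Hproper Hdom sqs qm) (PhiE Hproper Hdom sqh qhm).
have low := qhm qs sqs.
have e1 : forall q, phi (s + h) q = phi s q + dotv h q.
  by move=> q; rewrite /phi dotvDl; ring.
rewrite !e1 in low |- *.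
rewrite (dotvC qs h).
have hb := dot_bound h (qh - qs).
have hh : 0 <= `|h| := normr_ge0 h.
have dif : 0 <= phi s qh + dotv h qh - phi s qs - dotv h qs by lra.
rewrite ger0_norm //.
have hq1 := simplex_dist1 sqh sqs.
have hq0 : 0 <= `|qh - qs| := normr_ge0 _.
rewrite dotvBr in hb.
have [far|near] := leP ep `|qh - qs|.
  have := Hd0 qh (conj sqh far) => hK.
  have hb2 : n%:R * `|h| * `|qh - qs| <= n%:R * `|h|.
    by rewrite -[leRHS]mulr1 ler_wpM2l // mulr_ge0.
  have hb3 : n%:R * `|h| <= d0.
    have : n%:R * `|h| <= n%:R * del by rewrite ler_wpM2l // ltW.
    have E : n%:R * del + del = d0 by rewrite /del; field; rewrite gt_eqF.
    have : 0 < del by rewrite divr_gt0.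
    move: E; move: (n%:R * del) (n%:R * `|h|) => a b E hdl hab; lra.
  have := ler_norm (dotv h qh - dotv h qs) => hn.
  have : 0 <= eps * `|h| by apply: mulr_ge0 => //; exact: ltW.
  lra.
have hb2 : n%:R * `|h| * `|qh - qs| <= n%:R * `|h| * ep.
  by apply: ler_wpM2l; [rewrite mulr_ge0 | exact: ltW].
have hb3 : n%:R * `|h| * ep <= eps * `|h|.
  have E : n%:R * `|h| * ep + `|h| * ep = eps * `|h| by rewrite /ep; field; rewrite gt_eqF.
  have : 0 <= `|h| * ep by rewrite mulr_ge0 // ltW.
  move: E; move: (n%:R * `|h| * ep) (`|h| * ep) (eps * `|h|) => a b c E hb0; lra.
have := ler_norm (dotv h qh - dotv h qs) => hn.
have := qm qh sqh => hm.
lra.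
Qed.

Lemma mulT_bound d (Y : 'M[R]_(d, n)) (h : 'cV[R]_d) :
  `|Y^T *m h| <= d%:R * `|Y| * `|h|.
Proof.
apply: norm_le_entries; first by rewrite !mulr_ge0.
move=> i j; rewrite !mxE.
apply: (le_trans (ler_norm_sum _ _ _)).
have -> : d%:R * `|Y| * `|h| = \sum_(k < d) (`|Y| * `|h|).
  by rewrite sumr_const card_ord -mulrA mulr_natl.
by apply: ler_sum => k _; rewrite mxE normrM ler_pM ?entry_le.
Qed.

Lemma Phi_grad_comp d (Y : 'M[R]_(d, n)) (th : 'cV[R]_d) (qs : 'cV[R]_n) :
  simplex qs -> (forall q, simplex q -> phi (Y^T *m th) q <= phi (Y^T *m th) qs) ->
  has_grad (fun t => Phi (Y^T *m t)) th (Y *m qs).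
Proof.
move=> sqs qm; have /has_gradP est := Phi_grad sqs qm.
apply/has_gradP => eps e0.
set C := d%:R * `|Y| + 1.
have C0 : 0 < C by rewrite ltr_wpDl // mulr_ge0.
have [del0 d0 H] := est (eps / C) (divr_gt0 e0 C0).
exists (del0 / C); first by rewrite divr_gt0.
move=> h hd.
have hY : `|Y^T *m h| <= C * `|h|.
  apply: (le_trans (mulT_bound Y h)); apply: ler_wpM2r => //; rewrite /C lerDl //.
have hY2 : `|Y^T *m h| < del0.
  apply: (le_lt_trans hY).
  by move: hd; rewrite ltr_pdivlMr // mulrC.
have := H _ hY2.
rewrite mulmxDr.
have -> : dotv qs (Y^T *m h) = dotv (Y *m qs) h by rewrite dotvC dotv_tr dotvC.
move=> /le_trans; apply.
have -> : eps * `|h| = eps / C * (C * `|h|).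
  by field; rewrite gt_eqF.
by apply: ler_wpM2l => //; rewrite divr_ge0 // ltW.
Qed.

End Omega4.
Section Extra.
Context {R : realType}.

Lemma has_grad_affine k (f : 'cV[R]_k -> R) (x g b : 'cV[R]_k) (a : R) :
  has_grad f x g -> has_grad (fun t => a + f t - dotv t b) x (g - b).
Proof.
move=> /has_gradP est; apply/has_gradP => eps e0.
have [del d0 H] := est eps e0; exists del => // h hd.
have -> : a + f (x + h) - dotv (x + h) b - (a + f x - dotv x b) - dotv (g - b) h
    = f (x + h) - f x - dotv g h.
  rewrite dotvDl dotvBl (dotvC b h); ring.
exact: H.
Qed.

End Extra.

Unset Implicit Arguments.
Set Strict Implicit.

Theorem proposition6 (R : realType) (d n : nat) (Y : 'M[R]_(d, n))
  (OmegaD : 'cV[R]_n -> \bar R)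
  (* the columns of Y are the (distinct) elements of the finite set Y *)
  (Yinj : forall i j : 'I_n, col i Y = col j Y -> i = j)
  (* no element of Y is a convex combination of the others *)
  (Yext : forall i : 'I_n,
     ~ (exists q : 'cV[R]_n, simplex q /\ q i 0 = 0 /\ Y *m q = col i Y))
  (Hproper : eproper OmegaD)
  (Hlsc : lower_semicontinuous OmegaD)
  (Hconv : econvex OmegaD)
  (Hdom : edom OmegaD = simplex (R := R) (n := n))
  (Hleg : legendre_on_H OmegaD) :
  let OC := OmegaC Y OmegaD in
  let minimizer (q : 'cV[R]_n) :=
    forall q', simplex q' -> Y *m q' = Y *m q -> (OmegaD q <= OmegaD q')%E in
  (* (1) *)
  (forall (theta : 'cV[R]_d) (q : 'cV[R]_n),
     dotv (Y^T *m theta) q = dotv theta (Y *m q)) /\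
  (* (2) *)
  ((forall theta : 'cV[R]_d, fconj OC theta = fconj OmegaD (Y^T *m theta)) /\
   (forall theta : 'cV[R]_d, (fconj OC theta < +oo)%E) /\
   (forall theta : 'cV[R]_d, differentiable (fun t => fine (fconj OC t)) theta) /\
   (forall (w1 w2 : 'cV[R]_d) (t : R), Vperp Y w1 -> Vperp Y w2 ->
      fconj OC (t *: w1 + (1 - t) *: w2) =
      (t%:E * fconj OC w1 + (1 - t)%:E * fconj OC w2)%E)) /\
  (* (3) *)
  (forall (theta : 'cV[R]_d) (q : 'cV[R]_n), simplex q ->
     (OC (Y *m q) <= OmegaD q)%E /\
     (FYloss OC theta (Y *m q) <= FYloss OmegaD (Y^T *m theta) q)%E /\
     (OmegaD q = OC (Y *m q) <-> minimizer q) /\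
     (FYloss OmegaD (Y^T *m theta) q = FYloss OC theta (Y *m q) <-> minimizer q)) /\
  (* (4) *)
  (forall q : 'cV[R]_n, simplex q ->
     (ereal_inf [set FYloss OC th (Y *m q) | th in [set: 'cV[R]_d]]
      <= ereal_inf [set FYloss OmegaD (Y^T *m th) q | th in [set: 'cV[R]_d]])%E /\
     (ereal_inf [set FYloss OmegaD (Y^T *m th) q | th in [set: 'cV[R]_d]]
      = ereal_inf [set FYloss OC th (Y *m q) | th in [set: 'cV[R]_d]]
      <-> minimizer q)) /\
  (* (5) *)
  (forall (theta : 'cV[R]_d) (q : 'cV[R]_n), simplex q ->
     exists (gD : 'cV[R]_n) (gC : 'cV[R]_d),
       has_grad (fun s => fine (fconj OmegaD s)) (Y^T *m theta) gD /\
       has_grad (fun t => fine (fconj OC t)) theta gC /\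
       has_grad (fun t => fine (FYloss OmegaD (Y^T *m t) q)) theta (Y *m (gD - q)) /\
       has_grad (fun t => fine (FYloss OC t (Y *m q))) theta (Y *m (gD - q)) /\
       Y *m (gD - q) = gC - Y *m q).
Proof.
move=> OC minimizer.
have n0 := n_gt0 Hproper Hdom.
have OmE' := OmE Hproper Hdom.
set Ph := Phi OmegaD.
have fin : forall s, fconj OmegaD s = (Ph s)%:E := fun s => fconj_fin Hproper Hlsc Hdom s.
have PhiG : forall s q, simplex q -> phi OmegaD s q <= Ph s :=
  fun s q => @Phi_ge R n OmegaD Hproper Hlsc Hdom s q.
have [m mH] := om_min Hproper Hlsc Hdom.
have OCle : forall q, simplex q -> (OC (Y *m q) <= OmegaD q)%E.
  by move=> q sq; apply: ereal_inf_lbound; exists q.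
have OCge : forall mu q0, simplex q0 -> Y *m q0 = mu -> (m%:E <= OC mu)%E.
  move=> mu q0 _ _; apply/ereal_infP => _ [q' [sq' _] <-].
  by rewrite OmE' // lee_fin; apply: mH.
have OCfin : forall q, simplex q -> OC (Y *m q) = (fine (OC (Y *m q)))%:E.
  move=> q sq; have h1 := OCle q sq; have h2 := OCge _ q sq erefl.
  by rewrite OmE' // in h1; move: h1 h2; case: (OC (Y *m q)) => //.
have ocom : forall q, simplex q -> fine (OC (Y *m q)) <= om OmegaD q.
  by move=> q sq; have := OCle q sq; rewrite OCfin // OmE' // lee_fin.
have fOC : forall th, fconj OC th = (Ph (Y^T *m th))%:E.
  move=> th; have [qs sqs qm] := argmax Hproper Hlsc Hdom (Y^T *m th).
  have PhE : Ph (Y^T *m th) = phi OmegaD (Y^T *m th) qs := PhiE Hproper Hdom sqs qm.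
  apply/eqP; rewrite eq_le; apply/andP; split.
    apply: ge_ereal_sup => _ [mu _ <-].
    have [[q0 [sq0 Yq0]]|NE] := pselect (exists q0, simplex q0 /\ Y *m q0 = mu).
      have hge : ((dotv th mu - Ph (Y^T *m th))%:E <= OC mu)%E.
        apply/ereal_infP => _ [q' [sq' Yq'] <-].
        rewrite OmE' // lee_fin -Yq' -dotv_tr.
        by have := PhiG (Y^T *m th) q' sq'; rewrite /phi; lra.
      move: hge; have := OCle q0 sq0; rewrite Yq0.
      case: (OC mu) => [r| |] //=; rewrite ?lee_fin ?leNye //.
      by move=> _ h; lra.
    have -> : OC mu = +oo%E.
      rewrite /OC /OmegaC (_ : [set q | simplex q /\ Y *m q = mu] = set0).
        by rewrite image_set0 ereal_inf0.
      by apply/seteqP; split => // q [sq Yq]; apply: NE; exists q.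
    by rewrite /= leNye.
  apply: (@le_trans _ _ ((dotv th (Y *m qs))%:E - OC (Y *m qs))%E); last first.
    by apply: ereal_sup_ubound; exists (Y *m qs).
  rewrite OCfin // -EFinB lee_fin PhE /phi dotv_tr.
  by have := ocom qs sqs; lra.
have Phi_shift : forall s s' c, (forall q, simplex q -> dotv s' q = dotv s q + c) ->
    Ph s' = Ph s + c.
  move=> s s' c Hs.
  have [qs sqs qm] := argmax Hproper Hlsc Hdom s.
  have [qs' sqs' qm'] := argmax Hproper Hlsc Hdom s'.
  rewrite /Ph (PhiE Hproper Hdom sqs qm) (PhiE Hproper Hdom sqs' qm').
  have h1 := qm qs' sqs'; have h2 := qm' qs sqs.
  move: h1 h2; rewrite /phi !Hs //; lra.
have j0 : 'I_n := Ordinal n0.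
have Vp : forall w, Vperp Y w -> forall q, simplex q ->
    dotv (Y^T *m w) q = dotv w (col j0 Y).
  move=> w Vw q [_ q1].
  have ent : forall i, (Y^T *m w) i 0 = dotv w (col j0 Y).
    move=> i; have := Vw i j0; rewrite dotvBr => /eqP; rewrite subr_eq0 => /eqP <-.
    by rewrite mxE; apply: eq_bigr => k _; rewrite !mxE mulrC.
  rewrite /dotv; under eq_bigr do rewrite ent.
  by rewrite -mulr_sumr q1 mulr1.
split; first by move=> th q; exact: dotv_tr.
split.
  split; first by move=> th; rewrite fOC fin.
  split; first by move=> th; rewrite fOC ltry.
  split.
    move=> th.
    have [qs sqs qm] := argmax Hproper Hlsc Hdom (Y^T *m th).
    have -> : (fun t => fine (fconj OC t)) = (fun t => Ph (Y^T *m t)).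
      by apply/funext => t; rewrite fOC.
    exact: (Phi_grad_comp Hproper Hlsc Hconv Hdom Hleg sqs qm).1.
  move=> w1 w2 t V1 V2; rewrite !fOC -!EFinM -EFinD; congr EFin.
  have z0 : forall q, dotv (0 : 'cV[R]_n) q = 0 by move=> q; exact: dotv0l.
  rewrite (@Phi_shift 0 (Y^T *m w1) (dotv w1 (col j0 Y))); last first.
    by move=> q sq; rewrite Vp // z0 add0r.
  rewrite (@Phi_shift 0 (Y^T *m w2) (dotv w2 (col j0 Y))); last first.
    by move=> q sq; rewrite Vp // z0 add0r.
  rewrite (@Phi_shift 0 (Y^T *m (t *: w1 + (1 - t) *: w2)) (t * dotv w1 (col j0 Y) + (1 - t) * dotv w2 (col j0 Y))).
    ring.
  move=> q sq; rewrite mulmxDr -!scalemxAr dotvDl !dotvZl !Vp // z0 add0r //.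
have FYD : forall th q, simplex q ->
    FYloss OmegaD (Y^T *m th) q = (om OmegaD q + Ph (Y^T *m th) - dotv th (Y *m q))%:E.
  by move=> th q sq; rewrite /FYloss OmE' // fin dotv_tr EFinB EFinD.
have FYC : forall th q, simplex q ->
    FYloss OC th (Y *m q) = (fine (OC (Y *m q)) + Ph (Y^T *m th) - dotv th (Y *m q))%:E.
  by move=> th q sq; rewrite /FYloss OCfin // fOC EFinB EFinD.
have minE : forall q, simplex q -> (OmegaD q = OC (Y *m q) <-> minimizer q).
  move=> q sq; split.
    move=> E q' sq' Yq'; rewrite E; apply: ereal_inf_lbound; by exists q'.
  move=> mq; apply/eqP; rewrite eq_le OCle // andbT.
  by apply/ereal_infP => _ [q' [sq' Yq'] <-]; apply: mq.
have minE2 : forall q, simplex q -> (om OmegaD q = fine (OC (Y *m q)) <-> minimizer q).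
  move=> q sq; rewrite -minE //; split.
    by move=> h; rewrite OmE' // OCfin // h.
  by move=> h; rewrite /om h.
split.
  move=> th q sq; split; first exact: OCle.
  split.
    by rewrite FYD // FYC // lee_fin; have := ocom q sq; lra.
  split; first exact: minE.
  rewrite FYD // FYC // -minE2 //; split.
    by case=> h; lra.
  by move=> ->.
split.
  move=> q sq.
  have le1 : forall th, (FYloss OC th (Y *m q) <= FYloss OmegaD (Y^T *m th) q)%E.
    by move=> th; rewrite FYD // FYC // lee_fin; have := ocom q sq; lra.
  split.
    apply/ereal_infP => _ [th _ <-].
    apply: le_trans (le1 th); apply: ereal_inf_lbound; by exists th.
  split; last first.
    move=> mq; have := (minE2 q sq).2 mq => eq1.
    congr ereal_inf; apply/seteqP; split => _ [th _ <-]; exists th => //;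
      by rewrite FYD // FYC // eq1.
  move=> Einf.
  set oc := fine (OC (Y *m q)).
  have lbC : forall th, ((oc - om OmegaD q)%:E <= FYloss OC th (Y *m q))%E.
    move=> th; rewrite FYC // lee_fin.
    by have := PhiG (Y^T *m th) q sq; rewrite /phi dotv_tr -/oc; lra.
  have [i Ie] : exists i, ereal_inf [set FYloss OC th (Y *m q) | th in [set: 'cV[R]_d]] = i%:E.
    have h1 : ((oc - om OmegaD q)%:E <= ereal_inf [set FYloss OC th (Y *m q) | th in [set: 'cV[R]_d]])%E.
      by apply/ereal_infP => _ [th _ <-]; apply: lbC.
    have h2 : (ereal_inf [set FYloss OC th (Y *m q) | th in [set: 'cV[R]_d]] <= FYloss OC 0 (Y *m q))%E.
      by apply: ereal_inf_lbound; exists 0.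
    move: h1 h2; rewrite FYC //.
    case: (ereal_inf _) => [r| |] //= _ _; by exists r.
  have : ((i + om OmegaD q - oc)%:E <= ereal_inf [set FYloss OmegaD (Y^T *m th) q | th in [set: 'cV[R]_d]])%E.
    apply/ereal_infP => _ [th _ <-].
    have : (i%:E <= FYloss OC th (Y *m q))%E.
      by rewrite -Ie; apply: ereal_inf_lbound; exists th.
    by rewrite FYD // FYC // !lee_fin -/oc; lra.
  rewrite Einf Ie lee_fin => hh.
  apply/(minE2 q sq); have := ocom q sq; rewrite -/oc; lra.
move=> th q sq.
have [qs sqs qm] := argmax Hproper Hlsc Hdom (Y^T *m th).
have gC := Phi_grad_comp Hproper Hlsc Hconv Hdom Hleg sqs qm.
exists qs, (Y *m qs).
split; first exact: (Phi_grad Hproper Hlsc Hconv Hdom Hleg sqs qm).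
split.
  have -> : (fun t => fine (fconj OC t)) = (fun t => Ph (Y^T *m t)).
    by apply/funext => t; rewrite fOC.
  exact: gC.
rewrite mulmxBr.
split.
  have -> : (fun t => fine (FYloss OmegaD (Y^T *m t) q)) =
      (fun t => om OmegaD q + Ph (Y^T *m t) - dotv t (Y *m q)).
    by apply/funext => t; rewrite FYD.
  exact: has_grad_affine.
split; last by [].
have -> : (fun t => fine (FYloss OC t (Y *m q))) =
    (fun t => fine (OC (Y *m q)) + Ph (Y^T *m t) - dotv t (Y *m q)).
  by apply/funext => t; rewrite FYC.
exact: has_grad_affine.
Qed.
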